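(* Let $N$ be a normal subgroup of $F$ and let $L_N$ be the normal closure of $N$ in $F(Y_C)$. Then $L_N\trianglelefteq F(Y_C)$ and $L_N\cap F=N$.
   Context: Let $m\ge1$ and $C\ge1$ be integers. For $i=1,\dots,m$ let $Y_{C,i}=\{a_{1,i},\dots,a_{C,i}\}$, let $Y_C=\bigcup_i Y_{C,i}$ (all $a_{j,i}$ distinct), and let $F(Y_C)$ be the free group on $Y_C$. Put $A_i=a_{1,i}a_{2,i}\cdots a_{C,i}\in F(Y_C)$, $\mathcal{D}=\{A_1,\dots,A_m\}$, and let $F$ be the subgroup of $F(Y_C)$ generated by $\mathcal{D}$ (which is free with basis $\mathcal{D}$). *)

(* Defs.v *)
(* Free groups are not in the library: we model the free group
   F(X) on a generator type X concretely by freely reduced words. *)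
From mathcomp Require Import all_boot.
Set Implicit Arguments. Unset Strict Implicit. Unset Printing Implicit Defensive.

Section FreeGroup.
Variable X : eqType.

(* a letter is a generator x (false) or its inverse x^-1 (true) *)
Definition letter := (X * bool)%type.
Definition word := seq letter.

Definition lflip (l : letter) : letter := (l.1, ~~ l.2).

Definition reduced (w : word) : bool := sorted (fun a b => b != lflip a) w.

Definition red_step (a : letter) (acc : word) : word :=
  if acc is b :: t then (if b == lflip a then t else a :: acc) else [:: a].
Definition reduce (w : word) : word := foldr red_step [::] w.

Definition fg_one : word := [::].
Definition fg_mul (u v : word) : word := reduce (u ++ v).
Definition fg_inv (u : word) : word := rev (map lflip u).
Definition fg_conj (g n : word) : word := fg_mul (fg_inv g) (fg_mul n g).

Definition FG : word -> Prop := fun w => reduced w.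

Definition is_subgroup (H : word -> Prop) : Prop :=
  [/\ (forall w, H w -> reduced w), H fg_one,
      (forall u v, H u -> H v -> H (fg_mul u v)) &
      (forall u, H u -> H (fg_inv u))].

Definition normal_in (N G : word -> Prop) : Prop :=
  [/\ is_subgroup N, (forall w, N w -> G w) &
      (forall g n, G g -> N n -> N (fg_conj g n))].

Definition gen (S : word -> Prop) : word -> Prop := fun w =>
  exists ws : seq (bool * word),
    (forall p, p \in ws -> S p.2) /\
    w = reduce (flatten [seq (if p.1 then fg_inv p.2 else p.2) | p <- ws]).

Definition normal_closure (N : word -> Prop) : word -> Prop :=
  gen (fun x => exists g n, reduced g /\ N n /\ x = fg_conj g n).

End FreeGroup.

(* Generators a_{j,i} indexed by (j, i) : 'I_C * 'I_m (0-based). *)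
Definition A_word (m C : nat) (i : 'I_m) : word ('I_C * 'I_m)%type :=
  [seq ((j, i), false) | j <- enum 'I_C].

Arguments A_word m C i : clear implicits.

Definition Fsub (m C : nat) : word ('I_C * 'I_m)%type -> Prop :=
  gen (fun x => exists i : 'I_m, x = A_word m C i).
Arguments Fsub m C _ : clear implicits.

(* Main.v *)
Require Import Defs.
From mathcomp Require Import all_boot.
Set Implicit Arguments. Unset Strict Implicit. Unset Printing Implicit Defensive.

Lemma lflipK (X : eqType) : involutive (@lflip X).
Proof. by case=> x b; rewrite /lflip /= negbK. Qed.

Lemma reduce_cons (X : eqType) (a : letter X) w : reduce (a :: w) = red_step a (reduce w).
Proof. by []. Qed.

Lemma reduce_reduced (X : eqType) (w : word X) : reduced (reduce w).
Proof.
elim: w => [|a w IH] //=.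
rewrite -/(reduce w) /red_step; move: IH; case: (reduce w) => [|b t] //=.
case: eqP => [_|ne] /=; first by case: t => //= c u /andP[].
move=> ->; rewrite andbT; apply/eqP => E; apply: ne; exact: E.
Qed.

Lemma reducedE (X : eqType) (w : word X) : reduced w -> reduce w = w.
Proof.
elim: w => [|a w IH] //= H.
have Hw : reduced w by move: H; rewrite /reduced; case: w {IH} => //= b t /andP[].
rewrite IH //; move: H; rewrite /red_step; case: w {IH Hw} => [|b t] //= /andP[H _].
by rewrite (negbTE H).
Qed.

Lemma reduceK (X : eqType) (w : word X) : reduce (reduce w) = reduce w.
Proof. exact/reducedE/reduce_reduced. Qed.

Lemma reduce_catr (X : eqType) (u v : word X) : reduce (u ++ reduce v) = reduce (u ++ v).
Proof.
have E : forall z, reduce (u ++ z) = foldr (@red_step X) (reduce z) u.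
  by move=> z; rewrite /reduce foldr_cat.
by rewrite !E reduceK.
Qed.

Lemma red_stepK (X : eqType) (a : letter X) s : reduced s ->
  red_step a (red_step (lflip a) s) = s.
Proof.
case: s => [|c s] /=; first by rewrite /red_step eqxx.
rewrite /red_step lflipK.
case: eqP => [->|ne] H; last by rewrite eqxx.
case: s H => [|d s] //= /andP[H _].
by rewrite (negbTE H).
Qed.

Lemma reduce_catl (X : eqType) (u v : word X) : reduce (reduce u ++ v) = reduce (u ++ v).
Proof.
elim: u => [|a u IH] /=; first by [].
rewrite -IH.
rewrite {2}/red_step.
case E: (reduce u) => [|b t] /=; first by [].
case: eqP => [Eb|] //=.
rewrite Eb; have := red_stepK a (reduce_reduced (t ++ v)); rewrite {1}/red_step => ->; done.
Qed.

Lemma reduce_mid (X : eqType) (a b c : word X) :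
  reduce (a ++ reduce b ++ c) = reduce (a ++ b ++ c).
Proof. by rewrite -reduce_catr reduce_catl reduce_catr. Qed.

Lemma reduce_flip (X : eqType) (a : letter X) x y :
  reduce (x ++ lflip a :: a :: y) = reduce (x ++ y).
Proof.
rewrite /reduce !foldr_cat; congr foldr.
have := red_stepK (lflip a) (reduce_reduced y); rewrite lflipK; exact.
Qed.

Lemma fg_inv_cons (X : eqType) (a : letter X) t : fg_inv (a :: t) = fg_inv t ++ [:: lflip a].
Proof. by rewrite /fg_inv /= rev_cons cats1. Qed.

Lemma fg_inv_cat (X : eqType) (u v : word X) : fg_inv (u ++ v) = fg_inv v ++ fg_inv u.
Proof. by rewrite /fg_inv map_cat rev_cat. Qed.

Lemma fg_invK (X : eqType) : involutive (@fg_inv X).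
Proof. by move=> u; rewrite /fg_inv map_rev revK -map_comp (eq_map (@lflipK X)) map_id. Qed.

Lemma reduce_invl_mid (X : eqType) (u x y : word X) :
  reduce (x ++ fg_inv u ++ u ++ y) = reduce (x ++ y).
Proof.
elim: u x y => [|a t IH] x y //=.
rewrite fg_inv_cons -catA /= catA reduce_flip -catA; exact: IH.
Qed.

Lemma reduce_invr_mid (X : eqType) (u x y : word X) :
  reduce (x ++ u ++ fg_inv u ++ y) = reduce (x ++ y).
Proof. by rewrite -{1}(fg_invK u) reduce_invl_mid. Qed.

Lemma reduce_invl (X : eqType) (u : word X) : reduce (fg_inv u ++ u) = [::].
Proof. by have := reduce_invl_mid u [::] [::]; rewrite cats0. Qed.

Lemma reduced_inv (X : eqType) (u : word X) : reduced u -> reduced (fg_inv u).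
Proof.
rewrite /reduced /fg_inv rev_sorted sorted_map.
apply: sub_sorted => a b /= /eqP H; apply/eqP => E; apply: H.
by rewrite E lflipK.
Qed.

Lemma fg_inv_reduce (X : eqType) (w : word X) : fg_inv (reduce w) = reduce (fg_inv w).
Proof.
have R : reduced (fg_inv (reduce w)) by apply/reduced_inv/reduce_reduced.
have E := reduce_invl (reduce w).
have -> : reduce (fg_inv w) = reduce (reduce (fg_inv (reduce w) ++ reduce w) ++ fg_inv w) by rewrite E.
rewrite reduce_catl -catA reduce_mid -(cats0 (fg_inv w)) reduce_invr_mid cats0.
by rewrite (reducedE R).
Qed.


Definition sel (X : eqType) (p : bool * word X) := if p.1 then fg_inv p.2 else p.2.
Definition prodw (X : eqType) (ws : seq (bool * word X)) := reduce (flatten (map (@sel X) ws)).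
Definition phi (X Y : eqType) (f : letter X -> word Y) (w : word X) := reduce (flatten (map f w)).

Lemma phi_red_step (X Y : eqType) (f : letter X -> word Y)
  (fH : forall a, f (lflip a) = fg_inv (f a)) a t :
  reduce (flatten (map f (red_step a t))) = reduce (f a ++ flatten (map f t)).
Proof.
rewrite /red_step; case: t => [|b t] //=.
case: eqP => [->|] //=.
by rewrite fH; have := reduce_invr_mid (f a) [::] (flatten (map f t)).
Qed.

Lemma phi_reduce (X Y : eqType) (f : letter X -> word Y)
  (fH : forall a, f (lflip a) = fg_inv (f a)) w : phi f (reduce w) = phi f w.
Proof.
rewrite /phi; elim: w => [|a w IH] //=.
by rewrite phi_red_step // -reduce_catr IH reduce_catr.
Qed.

Lemma phi_cat (X Y : eqType) (f : letter X -> word Y) u v :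
  phi f (u ++ v) = fg_mul (phi f u) (phi f v).
Proof. by rewrite /phi /fg_mul map_cat flatten_cat reduce_catl reduce_catr. Qed.

Lemma phi_mul (X Y : eqType) (f : letter X -> word Y)
  (fH : forall a, f (lflip a) = fg_inv (f a)) u v :
  phi f (fg_mul u v) = fg_mul (phi f u) (phi f v).
Proof. by rewrite /fg_mul phi_reduce // phi_cat. Qed.

Lemma phi_inv (X Y : eqType) (f : letter X -> word Y)
  (fH : forall a, f (lflip a) = fg_inv (f a)) u :
  phi f (fg_inv u) = fg_inv (phi f u).
Proof.
rewrite /phi fg_inv_reduce; congr reduce.
elim: u => [|a u IH] //=.
by rewrite fg_inv_cons map_cat flatten_cat IH /= cats0 fH fg_inv_cat.
Qed.

Lemma phi_prod (X Y : eqType) (f : letter X -> word Y)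
  (fH : forall a, f (lflip a) = fg_inv (f a)) ws :
  phi f (prodw ws) = reduce (flatten (map (fun p => phi f (sel p)) ws)).
Proof.
rewrite /prodw phi_reduce //; elim: ws => [|p ws IH] //=.
rewrite phi_cat IH /fg_mul reduce_catr reduce_catl //.
Qed.

Lemma subgroup_flatten (X : eqType) (H : word X -> Prop) ys :
  is_subgroup H -> (forall y, y \in ys -> H y) -> H (reduce (flatten ys)).
Proof.
case=> Hr H1 HM HI; elim: ys => [|y ys IH] Hy //=.
have Hy0 : H y by apply: Hy; rewrite inE eqxx.
have Hys : H (reduce (flatten ys)) by apply: IH => z hz; apply: Hy; rewrite inE hz orbT.
have := HM _ _ Hy0 Hys.
by rewrite /fg_mul -/(reduce (y ++ flatten ys)) reduce_catr.
Qed.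


Lemma prodw_mul (X : eqType) (ws1 ws2 : seq (bool * word X)) :
  fg_mul (prodw ws1) (prodw ws2) = prodw (ws1 ++ ws2).
Proof. by rewrite /fg_mul /prodw reduce_catl reduce_catr map_cat flatten_cat. Qed.

Lemma prodw_inv (X : eqType) (ws : seq (bool * word X)) :
  fg_inv (prodw ws) = prodw (rev (map (fun p => (~~ p.1, p.2)) ws)).
Proof.
rewrite /prodw fg_inv_reduce; congr reduce.
elim: ws => [|p ws IH] //=.
rewrite fg_inv_cat IH rev_cons -cats1 map_cat flatten_cat /= cats0; congr cat.
by rewrite /sel /=; case: p.1; rewrite ?fg_invK.
Qed.

Lemma sel_conj (X : eqType) (g : word X) p :
  reduce (fg_inv g ++ sel p ++ g) = sel (p.1, fg_conj g p.2).
Proof.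
rewrite /sel /fg_conj /fg_mul /=; case: p.1; last by rewrite reduce_catr.
by rewrite reduce_catr fg_inv_reduce !fg_inv_cat fg_invK catA.
Qed.

Lemma prodw_conj (X : eqType) (g : word X) ws :
  fg_conj g (prodw ws) = prodw (map (fun p => (p.1, fg_conj g p.2)) ws).
Proof.
have -> : fg_conj g (prodw ws) = reduce (fg_inv g ++ flatten (map (@sel X) ws) ++ g).
  by rewrite /fg_conj /fg_mul /prodw reduce_catl reduce_catr.
rewrite /prodw.
elim: ws => [|p ws IH] /=; first by rewrite reduce_invl.
rewrite -[RHS]reduce_catr -IH reduce_catr -sel_conj reduce_catl -!catA.
by rewrite [in RHS](catA (fg_inv g) (sel p)) reduce_invr_mid -catA.
Qed.

Lemma conj_conj (X : eqType) (g g0 n : word X) :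
  fg_conj g (fg_conj g0 n) = fg_conj (fg_mul g0 g) n.
Proof.
rewrite /fg_conj /fg_mul fg_inv_reduce fg_inv_cat.
rewrite (reduce_catl (fg_inv g0 ++ reduce (n ++ g0))) reduce_catr -catA.
rewrite (catA (fg_inv g) (fg_inv g0)) reduce_mid.
by rewrite [in RHS]reduce_catl reduce_catr [in RHS]catA reduce_catr -!catA.
Qed.


Definition rho (m C : nat) (a : letter ('I_C * 'I_m)%type) : word ('I_C * 'I_m)%type :=
  if nat_of_ord a.1.1 == 0 then sel (a.2, A_word m C a.1.2) else [::].
Arguments rho m C a : clear implicits.

Lemma rhoH m C a : rho m C (lflip a) = fg_inv (rho m C a).
Proof.
rewrite /rho /lflip /=; case: ifP => // _; rewrite /sel /=.
by case: a.2; rewrite /= ?fg_invK.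
Qed.

Lemma reduced_pos (X : eqType) (w : word X) : all (fun l => ~~ l.2) w -> reduced w.
Proof.
elim: w => [|a w IH] //= /andP[Ha Hw].
have := IH Hw; rewrite /reduced; case: w {IH} Hw => [|b t] //= /andP[Hb _] ->.
rewrite andbT; apply/eqP => E; move: Hb; by rewrite E /lflip /= Ha.
Qed.

Lemma rho_A m C (hC : 1 <= C) i : phi (rho m C) (A_word m C i) = A_word m C i.
Proof.
have R : reduced (A_word m C i) by apply: reduced_pos; apply/allP => l /mapP [j _ ->].
case: C hC i R => // c _ i R.
have Z : forall s : seq 'I_c,
  flatten [seq rho m c.+1 l | l <- [seq (j, i, false) | j <- [seq lift ord0 j | j <- s]]] = [::].
  by elim => //= j s ->; rewrite /rho /=.
rewrite /phi {1}/A_word enum_ordSl /= Z cats0 /rho /=.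
exact: reducedE.
Qed.

Lemma rho_Fsub m C (hC : 1 <= C) w : Fsub m C w -> phi (rho m C) w = w.
Proof.
case=> ws [Hws ->]; rewrite -/(prodw ws) phi_prod; last exact: rhoH.
rewrite /prodw; congr reduce; congr flatten; apply/eq_in_map => p /Hws [i Ei].
case: p Ei => b x /= ->; rewrite /sel /=; case: b; rewrite ?phi_inv ?rho_A //; exact: rhoH.
Qed.

Lemma rho_in_Fsub m C g : Fsub m C (phi (rho m C) g).
Proof.
exists [seq (a.2, A_word m C a.1.2) | a <- g & nat_of_ord a.1.1 == 0]; split.
  by move=> p /mapP [a _ ->]; exists a.1.2.
rewrite /phi; congr reduce; elim: g => [|a g IH] //=.
rewrite /rho; case: ifP => _ //=; by rewrite IH.
Qed.

Theorem lemma3p1 (m C : nat) (hm : 1 <= m) (hC : 1 <= C)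
  (N : word ('I_C * 'I_m)%type -> Prop) :
  normal_in N (Fsub m C) ->
  normal_in (normal_closure N) (@FG _) /\
  (forall w, normal_closure N w /\ Fsub m C w <-> N w).
Proof.
move=> [[Nr N1 NM NI] NF Nconj].
split.
  split.
  - split.
    + by move=> w [ws [_ ->]]; exact: reduce_reduced.
    + by exists [::].
    + move=> u v [ws1 [H1 ->]] [ws2 [H2 ->]].
      rewrite -/(prodw ws1) -/(prodw ws2) prodw_mul.
      exists (ws1 ++ ws2); split => // p; rewrite mem_cat => /orP[]; [exact: H1|exact: H2].
    + move=> u [ws [H ->]]; rewrite -/(prodw ws) prodw_inv.
      eexists; split; last reflexivity.
      by move=> p; rewrite mem_rev => /mapP [q /H Hq ->].
  - by move=> w [ws [_ ->]]; exact: reduce_reduced.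
  - move=> g n Hg [ws [H ->]]; rewrite -/(prodw ws) prodw_conj.
    eexists; split; last reflexivity.
    move=> p /mapP [[b x] /H /= [g0 [n0 [Hg0 [Hn0 ->]]]] ->] /=.
    exists (fg_mul g0 g), n0; split; [exact: reduce_reduced|split=> //].
    by rewrite conj_conj.
move=> w; split.
  move=> [[ws [H Ew]] Fw].
  rewrite -(rho_Fsub hC Fw) Ew -/(prodw ws) phi_prod; last exact: rhoH.
  apply: subgroup_flatten; first by split.
  move=> y /mapP [[b x] /H /= [g [n [Hg [Hn ->]]]] ->].
  have Pc : N (phi (rho m C) (fg_conj g n)).
    rewrite /fg_conj !phi_mul ?phi_inv; try exact: rhoH.
    rewrite (rho_Fsub hC (NF _ Hn)); apply: Nconj => //; exact: rho_in_Fsub.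
  rewrite /sel /=; case: b => //; rewrite phi_inv; [exact: NI | exact: rhoH].
move=> Nw; split; last exact: NF.
exists [:: (false, w)]; split.
  move=> p; rewrite inE => /eqP -> /=; exists [::], w; split => //; split => //.
  by rewrite /fg_conj /fg_mul /= cats0 !reducedE //; apply: Nr.
by rewrite /= cats0 /sel /= reducedE //; apply: Nr.
Qed.
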